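(* Let $m,n\ge 1$, $k=\min(m,n)$, and let $M^\star\in\mathbb{R}^{m\times n}$ have singular value decomposition $M^\star=P\Sigma Q^\top$ with $P\in\mathbb{R}^{m\times k}$, $Q\in\mathbb{R}^{n\times k}$ having orthonormal columns $p_i,q_i$ and $\Sigma=\mathrm{diag}(\sigma_1,\dots,\sigma_k)$ with $\sigma_1>\sigma_2>\cdots>\sigma_k>0$. For $r\in\{1,\dots,k\}$ let $A_r=\sum_{i=1}^r\sigma_ip_iq_i^\top$, and for $U\in\mathbb{R}^{m\times k}$, $V\in\mathbb{R}^{n\times k}$ let $$\mathcal{E}(U,V,r)=\min_{S_r\subseteq\{1,\dots,k\},\,|S_r|=r}\bigl\|U\Pi_{S_r}V^\top-A_r\bigr\|_F^2,$$ where $\Pi_S$ is the $k\times k$ diagonal matrix with $(\Pi_S)_{ii}=1$ if $i\in S$ and $0$ otherwise. Let $(U,V)$ be any minimizer of $$\frac{1}{2^k-1}\sum_{\emptyset\neq S\subseteq\{1,\dots,k\}}\bigl\|U\Pi_SV^\top-M^\star\bigr\|_F^2,$$ and let $\lambda=\frac1k\|UV^\top\|_\star$. Then for every $r\in\{1,\dots,k\}$, $$\mathcal{E}(U,V,r)\ge\frac1k\Bigl(r\lambda-\sum_{i=1}^r\sigma_i\Bigr)^2.$$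
   Context: $\|\cdot\|_F$ is the Frobenius norm and $\|\cdot\|_\star$ the nuclear norm (sum of singular values). *)

(* Defs.v *)
From HB Require Import structures.
From mathcomp Require Import all_boot all_order all_algebra.
Set Implicit Arguments. Unset Strict Implicit. Unset Printing Implicit Defensive.
Import Order.TTheory GRing.Theory Num.Theory.
Local Open Scope ring_scope.

Definition frob2 {R : realFieldType} {m n : nat} (A : 'M[R]_(m, n)) : R :=
  \sum_(i < m) \sum_(j < n) (A i j) ^+ 2.

Definition PiS {R : realFieldType} {k : nat} (S : {set 'I_k}) : 'M[R]_k :=
  diag_mx (\row_(i < k) (i \in S)%:R).

Definition orthonormal_cols {R : realFieldType} {m d : nat} (P : 'M[R]_(m, d)) : Prop :=
  P^T *m P = 1%:M.

Definition is_svd {R : realFieldType} {m n d : nat} (A : 'M[R]_(m, n))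
  (P : 'M[R]_(m, d)) (s : 'rV[R]_d) (Q : 'M[R]_(n, d)) : Prop :=
  [/\ orthonormal_cols P, orthonormal_cols Q, (forall i, 0 <= s 0 i)
    & A = P *m diag_mx s *m Q^T].

Definition is_nuclear_norm {R : realFieldType} {m n : nat} (A : 'M[R]_(m, n)) (x : R) : Prop :=
  exists d (P : 'M[R]_(m, d)) (s : 'rV[R]_d) (Q : 'M[R]_(n, d)),
    is_svd A P s Q /\ x = \sum_(i < d) s 0 i.

Definition avg_loss {R : realFieldType} {m n k : nat} (Mst : 'M[R]_(m, n))
  (U : 'M[R]_(m, k)) (V : 'M[R]_(n, k)) : R :=
  (2 ^ k - 1)%:R^-1 * \sum_(S : {set 'I_k} | S != set0) frob2 (U *m PiS S *m V^T - Mst).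

(* A_r = sum_{i <= r} sigma_i p_i q_i^T  (0-based indices i < r) *)
Definition Ar {R : realFieldType} {m n k : nat} (P : 'M[R]_(m, k)) (sigma : 'rV[R]_k)
  (Q : 'M[R]_(n, k)) (r : nat) : 'M[R]_(m, n) :=
  \sum_(i < k | (i < r)%N) sigma 0 i *: (col i P *m (col i Q)^T).

(* Main.v *)
Require Import Defs.
From HB Require Import structures.
From mathcomp Require Import all_boot all_order all_algebra.
From mathcomp Require Import ring lra.
Import Order.TTheory GRing.Theory Num.Theory.
Local Open Scope ring_scope.

Set Implicit Arguments. Unset Strict Implicit. Unset Printing Implicit Defensive.


Definition ip {R : realFieldType} {m n : nat} (X Y : 'M[R]_(m, n)) : R :=
  \sum_(i < m) \sum_(j < n) X i j * Y i j.

Lemma frob2E (R : realFieldType) m n (X : 'M[R]_(m, n)) : frob2 X = ip X X.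
Proof. by rewrite /frob2 /ip; apply: eq_bigr => i _; apply: eq_bigr => j _; rewrite expr2. Qed.

Lemma ipC (R : realFieldType) m n (X Y : 'M[R]_(m, n)) : ip X Y = ip Y X.
Proof. by rewrite /ip; apply: eq_bigr => i _; apply: eq_bigr => j _; rewrite mulrC. Qed.

Lemma ipDl (R : realFieldType) m n (X Y Z : 'M[R]_(m, n)) : ip (X + Y) Z = ip X Z + ip Y Z.
Proof.
rewrite /ip -big_split; apply: eq_bigr => i _; rewrite -big_split; apply: eq_bigr => j _.
by rewrite mxE mulrDl.
Qed.

Lemma ipZl (R : realFieldType) m n (c : R) (X Z : 'M[R]_(m, n)) : ip (c *: X) Z = c * ip X Z.
Proof.
rewrite /ip mulr_sumr; apply: eq_bigr => i _; rewrite mulr_sumr; apply: eq_bigr => j _.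
by rewrite mxE mulrA.
Qed.

Lemma ipNl (R : realFieldType) m n (X Z : 'M[R]_(m, n)) : ip (- X) Z = - ip X Z.
Proof. by rewrite -scaleN1r ipZl mulN1r. Qed.

Lemma ipBl (R : realFieldType) m n (X Y Z : 'M[R]_(m, n)) : ip (X - Y) Z = ip X Z - ip Y Z.
Proof. by rewrite ipDl ipNl. Qed.

Lemma ipDr (R : realFieldType) m n (X Y Z : 'M[R]_(m, n)) : ip Z (X + Y) = ip Z X + ip Z Y.
Proof. by rewrite ipC ipDl ipC (ipC Y). Qed.
Lemma ipZr (R : realFieldType) m n (c : R) (X Z : 'M[R]_(m, n)) : ip Z (c *: X) = c * ip Z X.
Proof. by rewrite ipC ipZl ipC. Qed.
Lemma ipBr (R : realFieldType) m n (X Y Z : 'M[R]_(m, n)) : ip Z (X - Y) = ip Z X - ip Z Y.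
Proof. by rewrite ipC ipBl ipC (ipC Y). Qed.

Lemma ip_ge0 (R : realFieldType) m n (X : 'M[R]_(m, n)) : 0 <= ip X X.
Proof. by apply: sumr_ge0 => i _; apply: sumr_ge0 => j _; rewrite -expr2 sqr_ge0. Qed.

Lemma ip_tr (R : realFieldType) m n (X Y : 'M[R]_(m, n)) : ip X^T Y^T = ip X Y.
Proof. by rewrite /ip exchange_big; apply: eq_bigr => i _; apply: eq_bigr => j _; rewrite !mxE. Qed.

Lemma ip_mull (R : realFieldType) m n p (A : 'M[R]_(m, n)) (B : 'M[R]_(n, p)) (C : 'M[R]_(m, p)) :
  ip (A *m B) C = ip B (A^T *m C).
Proof.
rewrite /ip.
transitivity (\sum_(i < m) \sum_(j < p) \sum_(l < n) A i l * B l j * C i j).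
  apply: eq_bigr => i _; apply: eq_bigr => j _; rewrite mxE big_distrl /=.
  by apply: eq_bigr => l _.
rewrite exchange_big /=.
transitivity (\sum_(j < p) \sum_(l < n) \sum_(i < m) A i l * B l j * C i j).
  by apply: eq_bigr => j _; rewrite exchange_big.
rewrite exchange_big /=; apply: eq_bigr => l _; apply: eq_bigr => j _.
rewrite mxE big_distrr /=; apply: eq_bigr => i _.
by rewrite mxE mulrCA mulrA.
Qed.

Lemma ip_mulr (R : realFieldType) m n p (A : 'M[R]_(m, n)) (B : 'M[R]_(n, p)) (C : 'M[R]_(m, p)) :
  ip (A *m B) C = ip A (C *m B^T).
Proof.
by rewrite -ip_tr trmx_mul ip_mull trmxK -(ip_tr A) trmx_mul trmxK.
Qed.

Lemma quad_lin0 (R : realFieldType) (L K : R) : (forall t, 0 <= L * t + K * t ^+ 2) -> L = 0.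
Proof.
move=> H; apply/eqP; apply/negPn/negP => HL.
pose s := (`|K| + 1)^-1.
have s_gt0 : 0 < s by rewrite invr_gt0 ltr_wpDl.
have Ks : K * s < 1.
  rewrite /s ltr_pdivrMr ?mul1r; last by have := normr_ge0 K; lra.
  by have := ler_norm K; lra.
have := H (- L * s).
have L2 : 0 < L ^+ 2 by rewrite exprn_even_gt0.
have -> : L * (- L * s) + K * (- L * s) ^+ 2 = L ^+ 2 * s * (K * s - 1) by ring.
rewrite pmulr_rge0; last exact: mulr_gt0 L2 s_gt0.
clearbody s; lra.
Qed.

Lemma quad_disc (R : realFieldType) (a b c : R) : 0 <= b ->
  (forall t, 0 <= c + 2 * a * t + b * t ^+ 2) -> a ^+ 2 <= b * c.
Proof.
move=> b0 H.
have [b_eq0|b_gt0] := eqVneq b 0.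
  subst b; rewrite mul0r.
  have [a_eq0|a_ne0] := eqVneq a 0; first by rewrite a_eq0 expr0n.
  have := H (- (`|c| + 1) / (2 * a)).
  have -> : c + 2 * a * (- (`|c| + 1) / (2 * a)) + 0 * (- (`|c| + 1) / (2 * a)) ^+ 2
            = c - (`|c| + 1).
    by field.
  have := ler_norm c; lra.
have bp : 0 < b by rewrite lt_def b_gt0.
have := H (- a / b).
have -> : c + 2 * a * (- a / b) + b * (- a / b) ^+ 2 = (b * c - a ^+ 2) / b.
  by field.
by rewrite pmulr_lge0 ?invr_gt0 // subr_ge0.
Qed.

Lemma ip_CS (R : realFieldType) m n (X Y : 'M[R]_(m, n)) : ip X Y ^+ 2 <= ip X X * ip Y Y.
Proof.
rewrite mulrC; apply: quad_disc; first exact: ip_ge0.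
move=> t; have := ip_ge0 (X + t *: Y).
rewrite !(ipDl, ipDr, ipZl, ipZr) (ipC Y X).
move=> HH; apply: (le_trans HH); rewrite le_eqVlt; apply/orP; left; apply/eqP; ring.
Qed.


Definition ga {R : realFieldType} {m k : nat} (U : 'M[R]_(m, k)) (l : 'I_k) : R :=
  \sum_(a < m) U a l ^+ 2.

Definition Fo {R : realFieldType} {m n k : nat} (U : 'M[R]_(m, k)) (V : 'M[R]_(n, k))
  (M : 'M[R]_(m, n)) : R :=
  frob2 (U *m V^T) + \sum_l ga U l * ga V l - 4 * ip (U *m V^T) M.

Lemma mulmx_diagE (R : realFieldType) m n k (U : 'M[R]_(m, k)) (V : 'M[R]_(n, k)) (d : 'rV[R]_k) a b :
  (U *m diag_mx d *m V^T) a b = \sum_l d 0 l * (U a l * V b l).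
Proof.
rewrite mxE; apply: eq_bigr => l _; rewrite mul_mx_diag !mxE; ring.
Qed.

Lemma mulmxTE (R : realFieldType) m n k (U : 'M[R]_(m, k)) (V : 'M[R]_(n, k)) a b :
  (U *m V^T) a b = \sum_l (U a l * V b l).
Proof. by rewrite mxE; apply: eq_bigr => l _; rewrite mxE. Qed.

Definition ee {R : realFieldType} {m n k : nat} (U : 'M[R]_(m, k)) (V : 'M[R]_(n, k)) (l l' : 'I_k) : R :=
  (\sum_a U a l * U a l') * (\sum_b V b l * V b l').

Definition cc {R : realFieldType} {m n k : nat} (U : 'M[R]_(m, k)) (V : 'M[R]_(n, k)) (M : 'M[R]_(m, n)) (l : 'I_k) : R :=
  \sum_a \sum_b U a l * V b l * M a b.

Lemma ip_w (R : realFieldType) m n k (U : 'M[R]_(m, k)) (V : 'M[R]_(n, k)) (X M : 'M[R]_(m, n)) (w : 'I_k -> R) :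
  (forall a b, X a b = \sum_l w l * (U a l * V b l)) ->
  ip X M = \sum_l w l * cc U V M l.
Proof.
move=> HX; rewrite /ip.
transitivity (\sum_a \sum_b \sum_l w l * (U a l * V b l * M a b)).
  apply: eq_bigr => a _; apply: eq_bigr => b _; rewrite HX big_distrl /=.
  apply: eq_bigr => l _; ring.
transitivity (\sum_a \sum_l \sum_b w l * (U a l * V b l * M a b)).
  by apply: eq_bigr => a _; rewrite exchange_big.
rewrite exchange_big /=; apply: eq_bigr => l _; rewrite /cc mulr_sumr.
by apply: eq_bigr => a _; rewrite mulr_sumr.
Qed.

Lemma cc_w (R : realFieldType) m n k (U : 'M[R]_(m, k)) (V : 'M[R]_(n, k)) (X : 'M[R]_(m, n)) (w : 'I_k -> R) l :
  (forall a b, X a b = \sum_l w l * (U a l * V b l)) ->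
  cc U V X l = \sum_l' w l' * ee U V l l'.
Proof.
move=> HX; rewrite /cc.
transitivity (\sum_a \sum_b \sum_l' w l' * ((U a l * U a l') * (V b l * V b l'))).
  apply: eq_bigr => a _; apply: eq_bigr => b _; rewrite HX mulr_sumr.
  apply: eq_bigr => l' _; ring.
under eq_bigr => a _ do rewrite exchange_big /=.
rewrite exchange_big /=; apply: eq_bigr => l' _.
rewrite /ee big_distrlr /= mulr_sumr; apply: eq_bigr => a _; rewrite mulr_sumr.
apply: eq_bigr => b _; ring.
Qed.

Lemma frob2_w (R : realFieldType) m n k (U : 'M[R]_(m, k)) (V : 'M[R]_(n, k)) (X : 'M[R]_(m, n)) (w : 'I_k -> R) :
  (forall a b, X a b = \sum_l w l * (U a l * V b l)) ->
  frob2 X = \sum_l \sum_l' w l * w l' * ee U V l l'.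
Proof.
move=> HX; rewrite frob2E (ip_w _ HX); apply: eq_bigr => l _.
rewrite (cc_w l HX) mulr_sumr; apply: eq_bigr => l' _; ring.
Qed.

Lemma ga_ee (R : realFieldType) m n k (U : 'M[R]_(m, k)) (V : 'M[R]_(n, k)) l :
  ga U l * ga V l = ee U V l l.
Proof.
by rewrite /ga /ee; congr (_ * _); apply: eq_bigr => a _; rewrite expr2.
Qed.

Definition tog {k : nat} (j : 'I_k) (S : {set 'I_k}) : {set 'I_k} :=
  if j \in S then S :\ j else j |: S.

Lemma in_tog k (j x : 'I_k) S : (x \in tog j S) = (if x == j then j \notin S else x \in S).
Proof.
rewrite /tog; case: ifP => jS; rewrite !inE; case: eqP => [->|] //=; by rewrite jS.
Qed.

Lemma togK k (j : 'I_k) : involutive (tog j).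
Proof.
move=> S; apply/setP => x; rewrite !in_tog; case: eqP => [->|//].
by rewrite eqxx negbK.
Qed.

Lemma sum_tog (R : realFieldType) k (j : 'I_k) (F : {set 'I_k} -> R) :
  \sum_S F S = \sum_S F (tog j S).
Proof. exact: (reindex_inj (inv_inj (togK j))). Qed.

Lemma card_sets k : #|{set 'I_k}| = (2 ^ k)%N.
Proof. by rewrite -cardsT -powersetT card_powerset cardsT card_ord. Qed.

Lemma cnt0 (R : realFieldType) k : \sum_(S : {set 'I_k}) (1 : R) = (2 ^ k)%:R.
Proof. by rewrite sumr_const card_sets. Qed.

Lemma cnt1 (R : realFieldType) k (l : 'I_k) :
  \sum_(S : {set 'I_k}) ((l \in S)%:R : R) = (2 ^ k)%:R / 2.
Proof.
have H : \sum_(S : {set 'I_k}) ((l \in S)%:R : R) = \sum_(S : {set 'I_k}) (1 - (l \in S)%:R).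
  rewrite (sum_tog l); apply: eq_bigr => S _; rewrite in_tog eqxx.
  by case: (l \in S) => /=; rewrite ?subr0 ?subrr.
move: H; rewrite sumrB cnt0; set s := \sum_(S : {set 'I_k}) _ => H.
have E : s + s = (2 ^ k)%:R by rewrite {2}H addrC subrK.
by rewrite -E; field.
Qed.

Lemma cnt2 (R : realFieldType) k (l l' : 'I_k) : l != l' ->
  \sum_(S : {set 'I_k}) ((l \in S)%:R * (l' \in S)%:R : R) = (2 ^ k)%:R / 4.
Proof.
move=> ll'.
have H : \sum_(S : {set 'I_k}) ((l \in S)%:R * (l' \in S)%:R : R) =
   \sum_(S : {set 'I_k}) ((l \in S)%:R - (l \in S)%:R * (l' \in S)%:R).
  rewrite (sum_tog l'); apply: eq_bigr => S _; rewrite !in_tog eqxx (negbTE ll').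
  by case: (l \in S); case: (l' \in S) => /=; rewrite ?mulr0 ?mul0r ?mulr1 ?subr0 ?subrr.
move: H; rewrite sumrB cnt1; set s := \sum_(S : {set 'I_k}) _ => H.
have E : s + s = (2 ^ k)%:R / 2 by rewrite {2}H addrC subrK.
have -> : s = (s + s) / 2 by field.
by rewrite E; field.
Qed.

Lemma cnt2' (R : realFieldType) k (l l' : 'I_k) :
  \sum_(S : {set 'I_k}) ((l \in S)%:R * (l' \in S)%:R : R) = (2 ^ k)%:R / 4 * (1 + (l == l')%:R).
Proof.
case: eqP => [<-|/eqP ll']; last by rewrite cnt2 // addr0 mulr1.
under eq_bigr => S _ do rewrite -natrM mulnb andbb.
by rewrite cnt1 /=; field.
Qed.

Lemma sum_delta (R : realFieldType) k (l : 'I_k) (f : 'I_k -> R) :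
  \sum_l' f l' * (l == l')%:R = f l.
Proof.
rewrite (bigD1 l) //= eqxx mulr1 big1 ?addr0 // => l' /negbTE.
by rewrite eq_sym => ->; rewrite mulr0.
Qed.

Lemma sum_delta' (R : realFieldType) k (l : 'I_k) (f : 'I_k -> R) :
  \sum_l' f l' * (l' == l)%:R = f l.
Proof. by rewrite -(sum_delta l f); apply: eq_bigr => l' _; rewrite eq_sym. Qed.

Lemma XSE (R : realFieldType) m n k (U : 'M[R]_(m, k)) (V : 'M[R]_(n, k)) (S : {set 'I_k}) a b :
  (U *m PiS S *m V^T) a b = \sum_l (l \in S)%:R * (U a l * V b l).
Proof. by rewrite mulmx_diagE; apply: eq_bigr => l _; rewrite mxE. Qed.

Lemma TE (R : realFieldType) m n k (U : 'M[R]_(m, k)) (V : 'M[R]_(n, k)) a b :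
  (U *m V^T) a b = \sum_l 1 * (U a l * V b l).
Proof. by rewrite mulmxTE; apply: eq_bigr => l _; rewrite mul1r. Qed.

Lemma frob2B (R : realFieldType) m n (X M : 'M[R]_(m, n)) :
  frob2 (X - M) = frob2 X - 2 * ip X M + frob2 M.
Proof. rewrite !frob2E !(ipBl, ipBr) (ipC M X); ring. Qed.

Lemma avg_expand (R : realFieldType) m n k (U : 'M[R]_(m, k)) (V : 'M[R]_(n, k)) (M : 'M[R]_(m, n)) :
  \sum_(S : {set 'I_k} | S != set0) frob2 (U *m PiS S *m V^T - M)
  = (2 ^ k)%:R / 4 * Fo U V M + ((2 ^ k)%:R - 1) * frob2 M.
Proof.
pose g (S : {set 'I_k}) := \sum_l \sum_l' (l \in S)%:R * (l' \in S)%:R * ee U V l l'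
   - 2 * \sum_l (l \in S)%:R * cc U V M l + frob2 M.
have Hg : forall S, frob2 (U *m PiS S *m V^T - M) = g S.
  by move=> S; rewrite frob2B (frob2_w (XSE U V S)) (ip_w M (XSE U V S)).
under eq_bigr => S _ do rewrite Hg.
have Hall : \sum_S g S = (2 ^ k)%:R / 4 * Fo U V M + (2 ^ k)%:R * frob2 M.
  rewrite /g !big_split /= sumrN -mulr_sumr sumr_const card_sets -mulr_natl.
  rewrite /Fo (frob2_w (TE U V)) (ip_w M (TE U V)).
  have E1 : \sum_(S : {set 'I_k}) \sum_l \sum_l' (l \in S)%:R * (l' \in S)%:R * ee U V l l'
     = \sum_l \sum_l' ee U V l l' * ((2 ^ k)%:R / 4 * (1 + (l == l')%:R)).
    rewrite exchange_big /=; apply: eq_bigr => l _.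
    rewrite exchange_big /=; apply: eq_bigr => l' _.
    by rewrite -(cnt2' R l l') mulr_sumr; apply: eq_bigr => S _; rewrite mulrC.
  have E2 : \sum_(S : {set 'I_k}) \sum_l (l \in S)%:R * cc U V M l
     = \sum_l cc U V M l * ((2 ^ k)%:R / 2).
    rewrite exchange_big /=; apply: eq_bigr => l _.
    by rewrite -(cnt1 R l) mulr_sumr; apply: eq_bigr => S _; rewrite mulrC.
  rewrite E1 E2.
  have E3 : \sum_l \sum_l' ee U V l l' * ((2 ^ k)%:R / 4 * (1 + (l == l')%:R))
     = (2 ^ k)%:R / 4 * (\sum_l \sum_l' 1 * 1 * ee U V l l' + \sum_l ee U V l l).
    rewrite mulrDr mulr_sumr [X in _ = _ + X]mulr_sumr -big_split /=; apply: eq_bigr => l _.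
    rewrite -(sum_delta l (fun l' => (2 ^ k)%:R / 4 * ee U V l l')) mulr_sumr -big_split /=.
    by apply: eq_bigr => l' _; ring.
  rewrite E3 -mulr_suml.
  under [X in _ = _ * (_ + X - _) + _]eq_bigr => l _ do rewrite ga_ee.
  under [X in _ = _ * (_ + _ - 4 * X) + _]eq_bigr => l _ do rewrite mul1r.
  by rewrite -mulr_natl; field.
move: Hall; rewrite (bigD1 set0) //= => Hall.
have G0 : g set0 = frob2 M.
  rewrite /g (eq_bigr (fun _ => 0)); last first.
    by move=> l _; apply: big1 => l' _; rewrite in_set0 !mul0r.
  rewrite big1_eq (eq_bigr (fun _ => 0)) ?big1_eq; first by rewrite mulr0 subr0 add0r.
  by move=> l _; rewrite in_set0 mul0r.
have -> : \sum_(S | S != set0) g S = \sum_(i | true && (i != set0)) g i by [].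
rewrite G0 in Hall.
have := Hall; move=> /(congr1 (fun x => x - frob2 M)); rewrite addrC addrK => ->.
ring.
Qed.


Lemma Fo_min (R : realFieldType) m n k (U : 'M[R]_(m, k)) (V : 'M[R]_(n, k)) (M : 'M[R]_(m, n)) :
  (0 < k)%N ->
  (forall (U' : 'M[R]_(m, k)) (V' : 'M[R]_(n, k)), avg_loss M U V <= avg_loss M U' V') ->
  forall (U' : 'M[R]_(m, k)) (V' : 'M[R]_(n, k)), Fo U V M <= Fo U' V' M.
Proof.
move=> k0 H U' V'; have := H U' V'; rewrite /avg_loss !avg_expand.
have N1 : (1 < 2 ^ k)%N by rewrite -{1}(expn0 2) ltn_exp2l.
rewrite natrB ?(ltnW N1) //.
have Ng : 1 < (2 ^ k)%:R :> R by rewrite ltr1n.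
set N := (2 ^ k)%:R => HH.
have c0 : 0 < (N - 1)^-1 by rewrite invr_gt0 subr_gt0.
rewrite ler_pM2l // lerD2r in HH.
rewrite ler_pM2l // in HH; apply: divr_gt0; lra.
Qed.

Lemma Fo_tr (R : realFieldType) m n k (U : 'M[R]_(m, k)) (V : 'M[R]_(n, k)) (M : 'M[R]_(m, n)) :
  Fo U V M = Fo V U M^T.
Proof.
rewrite /Fo !frob2E -(ip_tr (U *m V^T)) -(ip_tr (U *m V^T) M) trmx_mul trmxK.
by congr (_ + _ - _); apply: eq_bigr => l _; rewrite mulrC.
Qed.

Lemma sq_sum (R : realFieldType) m (x y : 'I_m -> R) (c : R) :
  \sum_a (x a + c * y a) ^+ 2 = \sum_a x a ^+ 2 + 2 * c * \sum_a x a * y a + c ^+ 2 * \sum_a y a ^+ 2.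
Proof.
rewrite !mulr_sumr -!big_split /=; apply: eq_bigr => a _; ring.
Qed.

Lemma FO_u (R : realFieldType) m n k (U : 'M[R]_(m, k)) (V : 'M[R]_(n, k)) (M : 'M[R]_(m, n)) :
  (forall U' : 'M[R]_(m, k), Fo U V M <= Fo U' V M) ->
  forall i a, \sum_b (U *m V^T) a b * V b i + ga V i * U a i = 2 * \sum_b M a b * V b i.
Proof.
move=> H i.
pose w a := \sum_b (U *m V^T) a b * V b i + ga V i * U a i - 2 * \sum_b M a b * V b i.
suff: \sum_a w a ^+ 2 = 0.
  move=> /eqP; rewrite psumr_eq0 => [/allP Hw a|a _]; last exact: sqr_ge0.
  have := Hw a (mem_index_enum a); rewrite /= sqrf_eq0 => /eqP; rewrite /w; lra.
pose Z : 'M[R]_(m, n) := \matrix_(a, b) (w a * V b i).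
have key : forall t, Fo (\matrix_(a, l) (U a l + t * ((l == i)%:R * w a))) V M =
   Fo U V M + (2 * \sum_a w a ^+ 2) * t + (frob2 Z + (\sum_a w a ^+ 2) * ga V i) * t ^+ 2.
  move=> t.
  set U' := \matrix_(a, l) _.
  have ET : U' *m V^T = U *m V^T + t *: Z.
    apply/matrixP => a b; rewrite !mxE.
    under eq_bigr => l _ do rewrite !mxE mulrDl.
    rewrite big_split /=; congr (_ + _); first by apply: eq_bigr => l _; rewrite mxE.
    have -> : t * (w a * V b i) = t * w a * V b i by ring.
    rewrite -(sum_delta' i (fun l => t * w a * V b l)); apply: eq_bigr => l _; ring.
  have ipTZ : ip (U *m V^T) Z = \sum_a w a * \sum_b (U *m V^T) a b * V b i.
    rewrite /ip; apply: eq_bigr => a _; rewrite mulr_sumr; apply: eq_bigr => b _.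
    rewrite [Z a b]mxE; ring.
  have ipZM : ip Z M = \sum_a w a * \sum_b M a b * V b i.
    rewrite /ip; apply: eq_bigr => a _; rewrite mulr_sumr; apply: eq_bigr => b _.
    rewrite [Z a b]mxE; ring.
  have sumU : \sum_l ga U' l * ga V l = \sum_l ga U l * ga V l
      + (2 * t * \sum_a U a i * w a + t ^+ 2 * \sum_a w a ^+ 2) * ga V i.
    rewrite -(sum_delta' i (fun l => (2 * t * \sum_a U a l * w a + t ^+ 2 * \sum_a w a ^+ 2) * ga V l)).
    rewrite -big_split /=; apply: eq_bigr => l _.
    have -> : ga U' l = \sum_a (U a l + (t * (l == i)%:R) * w a) ^+ 2.
      by apply: eq_bigr => a _; rewrite mxE mulrA.
    rewrite sq_sum /ga.
    case: (l == i); rewrite ?(mulr1, mulr0, expr1n, addr0, mul0r); try ring.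
  have Sw : \sum_a w a ^+ 2 = \sum_a w a * \sum_b (U *m V^T) a b * V b i
      + ga V i * \sum_a U a i * w a - 2 * \sum_a w a * \sum_b M a b * V b i.
    rewrite mulr_sumr [X in _ = _ - X]mulr_sumr -!big_split -sumrN -big_split /=.
    apply: eq_bigr => a _; rewrite expr2 [X in _ * X = _]/w; ring.
  rewrite /Fo ET sumU !frob2E !(ipDl, ipDr, ipZl, ipZr) (ipC Z) ipTZ ipZM -frob2E Sw.
  ring.
have L0 := @quad_lin0 R (2 * \sum_a w a ^+ 2) (frob2 Z + (\sum_a w a ^+ 2) * ga V i).
have : 2 * \sum_a w a ^+ 2 = 0.
  apply: L0 => t; have := H (\matrix_(a, l) (U a l + t * ((l == i)%:R * w a))).
  by rewrite key; lra.
lra.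
Qed.

Lemma FO_v (R : realFieldType) m n k (U : 'M[R]_(m, k)) (V : 'M[R]_(n, k)) (M : 'M[R]_(m, n)) :
  (forall V' : 'M[R]_(n, k), Fo U V M <= Fo U V' M) ->
  forall i b, \sum_a (U *m V^T) a b * U a i + ga U i * V b i = 2 * \sum_a M a b * U a i.
Proof.
move=> H i b.
have H' : forall V' : 'M[R]_(n, k), Fo V U M^T <= Fo V' U M^T.
  by move=> V'; rewrite -!Fo_tr.
have := FO_u H' i b.
have -> : \sum_b0 (V *m U^T) b b0 * U b0 i = \sum_a (U *m V^T) a b * U a i.
  by apply: eq_bigr => a _; rewrite !mulmxTE; congr (_ * _); apply: eq_bigr => l _; rewrite mulrC.
have -> : \sum_b0 M^T b b0 * U b0 i = \sum_a M a b * U a i.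
  by apply: eq_bigr => a _; rewrite mxE.
done.
Qed.


Lemma sum2 (R : realFieldType) k (p q : 'I_k) (f g : 'I_k -> R) : p != q ->
  (forall l, l != p -> l != q -> f l = g l) ->
  \sum_l f l = \sum_l g l + (f p - g p) + (f q - g q).
Proof.
move=> pq H.
have E : forall h : 'I_k -> R, \sum_l h l = h p + (h q + \sum_(l | (l != p) && (l != q)) h l).
  move=> h; rewrite (bigD1 p) //=; congr (_ + _).
  rewrite (bigD1 q) /=; last by rewrite eq_sym.
  congr (_ + _); apply: eq_bigl => l; by rewrite andbC.
rewrite !E.
have -> : \sum_(l | (l != p) && (l != q)) f l = \sum_(l | (l != p) && (l != q)) g l.
  by apply: eq_bigr => l /andP [] /H.
ring.
Qed.

Lemma sq_sum_div (R : realFieldType) m (x y : 'I_m -> R) (c d : R) :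
  \sum_a ((x a - c * y a) / d) ^+ 2 = (\sum_a x a ^+ 2 - 2 * c * \sum_a x a * y a + c ^+ 2 * \sum_a y a ^+ 2) / d ^+ 2.
Proof.
have -> : \sum_a ((x a - c * y a) / d) ^+ 2 = \sum_a (x a + (- c) * y a) ^+ 2 / d ^+ 2.
  by apply: eq_bigr => a _; rewrite expr_div_n mulNr.
by rewrite -mulr_suml sq_sum; congr (_ / _); ring.
Qed.

Lemma G_pert (R : realFieldType) m n k (U : 'M[R]_(m, k)) (V : 'M[R]_(n, k)) (M : 'M[R]_(m, n)) :
  (forall (U' : 'M[R]_(m, k)) (V' : 'M[R]_(n, k)), Fo U V M <= Fo U' V' M) ->
  forall (p q : 'I_k) (x y : R), p != q -> x * y != 1 ->
  0 <= (ga U p + 2 * y * (\sum_a U a p * U a q) + y ^+ 2 * ga U q)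
         * (ga V p - 2 * x * (\sum_b V b p * V b q) + x ^+ 2 * ga V q)
     + (ga U q + 2 * x * (\sum_a U a p * U a q) + x ^+ 2 * ga U p)
         * (ga V q - 2 * y * (\sum_b V b p * V b q) + y ^+ 2 * ga V p)
     - (1 - x * y) ^+ 2 * (ga U p * ga V p + ga U q * ga V q).
Proof.
move=> H p q x y pq xy1.
set d := 1 - x * y.
have d0 : d != 0 by rewrite /d subr_eq0 eq_sym.
pose U' : 'M[R]_(m, k) := \matrix_(a, l) (U a l + (l == p)%:R * (y * U a q) + (l == q)%:R * (x * U a p)).
pose V' : 'M[R]_(n, k) := \matrix_(b, l) (V b l + (l == p)%:R * ((V b p - x * V b q) / d - V b p)
                                        + (l == q)%:R * ((V b q - y * V b p) / d - V b q)).
have qp : (q == p) = false by apply/negbTE; rewrite eq_sym.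
have U'p : forall a, U' a p = U a p + y * U a q by move=> a; rewrite mxE eqxx (negbTE pq) /= mul1r mul0r; ring.
have U'q : forall a, U' a q = U a q + x * U a p by move=> a; rewrite mxE eqxx qp /= mul1r mul0r; ring.
have V'p : forall b, V' b p = (V b p - x * V b q) / d by move=> b; rewrite mxE eqxx (negbTE pq) /= mul1r mul0r; ring.
have V'q : forall b, V' b q = (V b q - y * V b p) / d by move=> b; rewrite mxE eqxx qp /= mul1r mul0r; ring.
have U'l : forall a l, l != p -> l != q -> U' a l = U a l.
  by move=> a l /negbTE lp /negbTE lq; rewrite mxE lp lq /= !mul0r; ring.
have V'l : forall b l, l != p -> l != q -> V' b l = V b l.
  by move=> b l /negbTE lp /negbTE lq; rewrite mxE lp lq /= !mul0r; ring.
have ET : U' *m V'^T = U *m V^T.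
  apply/matrixP => a b; rewrite !mulmxTE.
  rewrite (@sum2 _ _ p q (fun l => U' a l * V' b l) (fun l => U a l * V b l)) //; last first.
    by move=> l lp lq; rewrite U'l // V'l.
  by rewrite U'p U'q V'p V'q /d; field.
have Hs := H U' V'.
rewrite /Fo ET in Hs.
rewrite (@sum2 _ _ p q (fun l => ga U' l * ga V' l) (fun l => ga U l * ga V l)) // in Hs; last first.
  move=> l lp lq; congr (_ * _); apply: eq_bigr => a _; by rewrite ?U'l ?V'l.
have gUp : ga U' p = ga U p + 2 * y * (\sum_a U a p * U a q) + y ^+ 2 * ga U q.
  by rewrite /ga; under eq_bigr => a _ do rewrite U'p; rewrite sq_sum.
have gUq : ga U' q = ga U q + 2 * x * (\sum_a U a p * U a q) + x ^+ 2 * ga U p.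
  rewrite /ga; under eq_bigr => a _ do rewrite U'q; rewrite sq_sum.
  by congr (_ + _ * _ + _); apply: eq_bigr => a _; rewrite mulrC.
have gVp : ga V' p = (ga V p - 2 * x * (\sum_b V b p * V b q) + x ^+ 2 * ga V q) / d ^+ 2.
  by rewrite /ga; under eq_bigr => b _ do rewrite V'p; rewrite sq_sum_div.
have gVq : ga V' q = (ga V q - 2 * y * (\sum_b V b p * V b q) + y ^+ 2 * ga V p) / d ^+ 2.
  rewrite /ga; under eq_bigr => b _ do rewrite V'q; rewrite sq_sum_div.
  by congr ((_ - _ * _ + _) / _); apply: eq_bigr => b _; rewrite mulrC.
rewrite gUp gUq gVp gVq in Hs.
have d2 : 0 < d ^+ 2 by rewrite exprn_even_gt0.
set A := _ * _ + _ * _ - _.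
have -> : A = d ^+ 2 * ((ga U p + 2 * y * (\sum_a U a p * U a q) + y ^+ 2 * ga U q)
         * ((ga V p - 2 * x * (\sum_b V b p * V b q) + x ^+ 2 * ga V q) / d ^+ 2)
     + (ga U q + 2 * x * (\sum_a U a p * U a q) + x ^+ 2 * ga U p)
         * ((ga V q - 2 * y * (\sum_b V b p * V b q) + y ^+ 2 * ga V p) / d ^+ 2)
     - (ga U p * ga V p + ga U q * ga V q)).
  by rewrite /A /d; field.
apply: mulr_ge0; first exact: ltW.
move: Hs; set Z := \sum_l ga U l * ga V l; lra.
Qed.


Lemma ga_ge0 (R : realFieldType) m k (U : 'M[R]_(m, k)) l : 0 <= ga U l.
Proof. by apply: sumr_ge0 => a _; apply: sqr_ge0. Qed.

Lemma G_first (R : realFieldType) m n k (U : 'M[R]_(m, k)) (V : 'M[R]_(n, k)) (M : 'M[R]_(m, n)) :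
  (forall (U' : 'M[R]_(m, k)) (V' : 'M[R]_(n, k)), Fo U V M <= Fo U' V' M) ->
  forall p q : 'I_k, p != q ->
  (\sum_a U a p * U a q) * ga V q = ga U p * (\sum_b V b p * V b q).
Proof.
move=> H p q pq.
set al := \sum_a U a p * U a q; set be := \sum_b V b p * V b q.
suff E : 2 * (al * ga V q - ga U p * be) = 0.
  by move: E => /eqP; rewrite mulf_eq0 pnatr_eq0 /= subr_eq0 => /eqP.
apply: (@quad_lin0 R _ (2 * ga U p * ga V q)) => t.
have := @G_pert R m n k U V M H p q t 0 pq.
rewrite mulr0 eq_sym oner_eq0 => /(_ isT).
rewrite -/al -/be => HH; apply: (le_trans HH); rewrite le_eqVlt; apply/orP; left; apply/eqP.
ring.
Qed.

Lemma eq_c (R : realFieldType) m n k (U : 'M[R]_(m, k)) (V : 'M[R]_(n, k)) (M : 'M[R]_(m, n)) :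
  (forall (U' : 'M[R]_(m, k)) (V' : 'M[R]_(n, k)), Fo U V M <= Fo U' V' M) ->
  forall p q : 'I_k, ga U p * ga V p = ga U q * ga V q.
Proof.
move=> H p q; case: (eqVneq p q) => [->//|pq].
have qp : q != p by rewrite eq_sym.
have F1 := G_first H pq.
have F2 := G_first H qp.
have GP := @G_pert R m n k U V M H p q.
have e1 : \sum_a U a q * U a p = \sum_a U a p * U a q by apply: eq_bigr => a _; rewrite mulrC.
have e2 : \sum_b V b q * V b p = \sum_b V b p * V b q by apply: eq_bigr => a _; rewrite mulrC.
rewrite e1 e2 in F2.
move: F1 F2 GP.
set al := \sum_a U a p * U a q; set be := \sum_b V b p * V b q.
have := ga_ge0 U p; have := ga_ge0 U q; have := ga_ge0 V p; have := ga_ge0 V q.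
set ap := ga U p; set aq := ga U q; set bp := ga V p; set bq := ga V q.
move=> bq0 bp0 aq0 ap0 F1 F2 GP.
apply/eqP; apply/negPn/negP => hne.
have hne' : ap * bp - aq * bq != 0 by rewrite subr_eq0.
have be0 : be = 0.
  have : be * (ap * bp - aq * bq) = 0.
    have -> : be * (ap * bp - aq * bq) = bp * (ap * be) - bq * (aq * be) by ring.
    rewrite -F1 -F2; ring.
  by move/eqP; rewrite mulf_eq0 (negbTE hne') orbF => /eqP.
have al0 : al = 0.
  have : al * (ap * bp - aq * bq) = 0.
    have -> : al * (ap * bp - aq * bq) = ap * (al * bp) - aq * (al * bq) by ring.
    rewrite F1 F2; ring.
  by move/eqP; rewrite mulf_eq0 (negbTE hne') orbF => /eqP.
rewrite al0 be0 in GP.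
have C0p : 0 < ap * bp + aq * bq.
  rewrite lt_def; apply/andP; split; last by apply: addr_ge0; apply: mulr_ge0.
  apply/negP => /eqP h.
  have h1 : ap * bp = 0 by apply/eqP; rewrite eq_le mulr_ge0 // andbT; have := mulr_ge0 aq0 bq0; lra.
  have h2 : aq * bq = 0 by lra.
  by move: hne; rewrite h1 h2 eqxx.
have key : forall x y, x * y != 1 -> 0 <= x ^+ 2 * (ap * bq) + y ^+ 2 * (aq * bp) + x * y * (ap * bp + aq * bq).
  move=> x y xy; have := GP x y pq xy.
  have -> : (ap + 2 * y * 0 + y ^+ 2 * aq) * (bp - 2 * x * 0 + x ^+ 2 * bq) +
    (aq + 2 * x * 0 + x ^+ 2 * ap) * (bq - 2 * y * 0 + y ^+ 2 * bp) -
    (1 - x * y) ^+ 2 * (ap * bp + aq * bq) = 2 * (x ^+ 2 * (ap * bq) + y ^+ 2 * (aq * bp) + x * y * (ap * bp + aq * bq)) by ring.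
  by rewrite pmulr_rge0.
have [C0|Cp] := eqVneq (aq * bp) 0.
  set A := ap * bq in key *; set B := ap * bp + aq * bq in C0p key *.
  have A0 : 0 <= A by apply: mulr_ge0.
  clearbody A B.
  have := key 1 (- (A + 1) / B).
  have -> : 1 * (- (A + 1) / B) = - ((A + 1) / B) by rewrite mul1r mulNr.
  have xy : - ((A + 1) / B) != 1.
    have : 0 < (A + 1) / B by apply: divr_gt0; lra.
    move=> h; apply/eqP => h2; lra.
  move=> /(_ xy).
  rewrite C0 mulr0 addr0 expr1n mul1r mulNr divfK; last by rewrite gt_eqF.
  lra.
have Cg : 0 < aq * bp by rewrite lt_def Cp mulr_ge0.
set A := ap * bq in key *; set C := aq * bp in Cg key *; set B := ap * bp + aq * bq in C0p key *.
have I1 : A * C - B ^+ 2 / 4 = - (ap * bp - aq * bq) ^+ 2 / 4 by rewrite /A /B /C; field.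
have : 0 < (ap * bp - aq * bq) ^+ 2 by rewrite exprn_even_gt0.
move: I1; clearbody A B C => I1 sq.
have := key C (- (B / 2)).
have xy : C * - (B / 2) != 1.
  have : 0 < C * (B / 2) by apply: mulr_gt0 => //; lra.
  move=> h; apply/eqP => h2; rewrite mulrN in h2; lra.
move=> /(_ xy).
have -> : C ^+ 2 * A + (- (B / 2)) ^+ 2 * C + C * - (B / 2) * B = C * (A * C - B ^+ 2 / 4) by field.
rewrite pmulr_rge0 // I1.
lra.
Qed.


Lemma NV (R : realFieldType) m n k (U : 'M[R]_(m, k)) (V : 'M[R]_(n, k)) (M : 'M[R]_(m, n)) :
  (forall U' : 'M[R]_(m, k), Fo U V M <= Fo U' V M) ->
  (2%:R *: M - U *m V^T) *m V = U *m diag_mx (\row_i ga V i).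
Proof.
move=> H; apply/matrixP => a i; rewrite mul_mx_diag !mxE.
have := FO_u H i a.
have -> : \sum_j (2%:R *: M - U *m V^T) a j * V j i = 2 * \sum_b M a b * V b i - \sum_b (U *m V^T) a b * V b i.
  rewrite mulr_sumr -sumrB; apply: eq_bigr => b _; rewrite !mxE; ring.
move=> HH; rewrite -HH; ring.
Qed.

Lemma NtU (R : realFieldType) m n k (U : 'M[R]_(m, k)) (V : 'M[R]_(n, k)) (M : 'M[R]_(m, n)) :
  (forall V' : 'M[R]_(n, k), Fo U V M <= Fo U V' M) ->
  (2%:R *: M - U *m V^T)^T *m U = V *m diag_mx (\row_i ga U i).
Proof.
move=> H; apply/matrixP => b i; rewrite mul_mx_diag !mxE.
have := FO_v H i b.
have -> : \sum_j (2%:R *: M - U *m V^T)^T b j * U j i = 2 * \sum_a M a b * U a i - \sum_a (U *m V^T) a b * U a i.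
  rewrite mulr_sumr -sumrB; apply: eq_bigr => a _; rewrite !mxE; ring.
move=> HH; rewrite -HH; ring.
Qed.

Lemma sym_diag (R : realFieldType) m k (V : 'M[R]_(m, k)) (d : 'rV[R]_k) :
  (V *m diag_mx d *m V^T)^T = V *m diag_mx d *m V^T.
Proof. by rewrite !trmx_mul trmxK tr_diag_mx mulmxA. Qed.

Lemma half_eq (R : realFieldType) m n (A B : 'M[R]_(m, n)) : 2%:R *: A = 2%:R *: B -> A = B.
Proof.
move=> h; have := congr1 (fun X => (2%:R)^-1 *: X) h.
by rewrite !scalerA mulVf ?pnatr_eq0 // !scale1r.
Qed.

Lemma sym_conds (R : realFieldType) m n k (U : 'M[R]_(m, k)) (V : 'M[R]_(n, k)) (M : 'M[R]_(m, n)) :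
  (forall (U' : 'M[R]_(m, k)) (V' : 'M[R]_(n, k)), Fo U V M <= Fo U' V' M) ->
  (U *m V^T)^T *m M = M^T *m (U *m V^T) /\ (U *m V^T) *m M^T = M *m (U *m V^T)^T.
Proof.
move=> H.
have h1 := NV (fun U' => H U' V).
have h2 := NtU (H U).
set T := U *m V^T in h1 h2 *.
set N := 2%:R *: M - T in h1 h2.
have e1 : N^T *m T = V *m diag_mx (\row_i ga U i) *m V^T by rewrite /T mulmxA h2.
have e2 : T *m N^T = U *m diag_mx (\row_i ga V i) *m U^T.
  by rewrite /T -mulmxA -trmx_mul h1 trmx_mul tr_diag_mx mulmxA.
have s1 : T^T *m N = N^T *m T by rewrite -[N]trmxK -trmx_mul trmxK e1 sym_diag.
have s2 : N *m T^T = T *m N^T by rewrite -[N]trmxK -trmx_mul !trmxK e2 sym_diag.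
have h1' : T^T *m (2%:R *: M) = (2%:R *: M)^T *m T.
  by move: s1; rewrite /N mulmxBr linearB /= mulmxBl => /addIr.
have h2' : (2%:R *: M) *m T^T = T *m (2%:R *: M)^T.
  by move: s2; rewrite /N mulmxBl linearB /= mulmxBr => /addIr.
split.
  by apply: half_eq; rewrite scalemxAr h1' linearZ /= -scalemxAl.
by apply: half_eq; rewrite [RHS]scalemxAl h2' linearZ /= -scalemxAr.
Qed.


Lemma Y_diag (R : realFieldType) m n k (P : 'M[R]_(m, k)) (Q : 'M[R]_(n, k)) (s : 'rV[R]_k) (T : 'M[R]_(m, n)) :
  P^T *m P = 1%:M -> Q^T *m Q = 1%:M ->
  (forall i, 0 < s 0 i) -> (forall i j, i != j -> s 0 i != s 0 j) ->
  T^T *m (P *m diag_mx s *m Q^T) = (P *m diag_mx s *m Q^T)^T *m T ->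
  T *m (P *m diag_mx s *m Q^T)^T = (P *m diag_mx s *m Q^T) *m T^T ->
  forall a b, a != b -> (P^T *m T *m Q) a b = 0.
Proof.
move=> hP hQ spos sneq S1 S2 a b ab.
have E1 : diag_mx s *m (P^T *m T *m Q) = (P^T *m T *m Q)^T *m diag_mx s.
  move: S1 => /(congr1 (fun X => Q^T *m X *m Q)).
  rewrite /= !trmx_mul !trmxK tr_diag_mx !mulmxA hQ mul1mx -[_ *m Q^T *m Q]mulmxA hQ mulmx1.
  move=> h; rewrite ?mulmxA; first [by rewrite h | by rewrite -h].
have E2 : (P^T *m T *m Q) *m diag_mx s = diag_mx s *m (P^T *m T *m Q)^T.
  move: S2 => /(congr1 (fun X => P^T *m X *m P)).
  rewrite /= !trmx_mul !trmxK tr_diag_mx !mulmxA hP mul1mx -[_ *m P^T *m P]mulmxA hP mulmx1.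
  move=> h; rewrite ?mulmxA; first [by rewrite h | by rewrite -h].
set Y := P^T *m T *m Q in E1 E2 *; clearbody Y.
have e1 : (diag_mx s *m Y) a b = (Y^T *m diag_mx s) a b by rewrite E1.
have e2 : (Y *m diag_mx s) a b = (diag_mx s *m Y^T) a b by rewrite E2.
move: e1 e2; rewrite !mul_diag_mx !mul_mx_diag !mxE => e1 e2.
have h : (s 0 a ^+ 2 - s 0 b ^+ 2) * Y a b = 0.
  have -> : (s 0 a ^+ 2 - s 0 b ^+ 2) * Y a b = s 0 a * (s 0 a * Y a b) - s 0 b * (Y a b * s 0 b) by ring.
  rewrite e1 e2; ring.
move/eqP: h; rewrite mulf_eq0 => /orP [|/eqP //].
rewrite subr_eq0 eqrXn2 // ?ltW //.
by rewrite (negbTE (sneq _ _ ab)).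
Qed.

Lemma diag_inv (R : realFieldType) k (s : 'rV[R]_k) : (forall i, 0 < s 0 i) ->
  diag_mx s *m diag_mx (\row_i (s 0 i)^-1) = 1%:M.
Proof.
move=> sp; rewrite mulmx_diag; apply/matrixP => i j; rewrite !mxE.
by case: (i == j) => //=; rewrite divff ?gt_eqF.
Qed.

Lemma cancel_diag (R : realFieldType) m k (s : 'rV[R]_k) (A B : 'M[R]_(m, k)) : (forall i, 0 < s 0 i) ->
  A *m diag_mx s = B *m diag_mx s -> A = B.
Proof.
move=> sp h; have := congr1 (fun X => X *m diag_mx (\row_i (s 0 i)^-1)) h.
by rewrite /= -!mulmxA diag_inv // !mulmx1.
Qed.

Lemma T_eq (R : realFieldType) m n k (P : 'M[R]_(m, k)) (Q : 'M[R]_(n, k)) (s : 'rV[R]_k) (T : 'M[R]_(m, n)) :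
  P^T *m P = 1%:M -> Q^T *m Q = 1%:M -> (forall i, 0 < s 0 i) -> (k = m \/ k = n) ->
  T^T *m (P *m diag_mx s *m Q^T) = (P *m diag_mx s *m Q^T)^T *m T ->
  T *m (P *m diag_mx s *m Q^T)^T = (P *m diag_mx s *m Q^T) *m T^T ->
  T = P *m (P^T *m T *m Q) *m Q^T.
Proof.
move=> hP hQ spos hk S1 S2.
have A1 : T *m Q = P *m P^T *m T *m Q.
  apply: (cancel_diag spos).
  have h := congr1 (fun X => X *m P) S2.
  move: h; rewrite /= !trmx_mul !trmxK tr_diag_mx -!mulmxA hP mulmx1 => h.
  by rewrite h [P^T *m (P *m _)]mulmxA hP mul1mx.
have A2 : T^T *m P = Q *m Q^T *m T^T *m P.
  apply: (cancel_diag spos).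
  have h := congr1 (fun X => X *m Q) S1.
  move: h; rewrite /= !trmx_mul !trmxK tr_diag_mx -!mulmxA hQ mulmx1 => h.
  by rewrite h [Q^T *m (Q *m _)]mulmxA hQ mul1mx.
case: hk => hk.
  subst k.
  have PP : P *m P^T = 1%:M by apply: mulmx1C.
  have A2' : P^T *m T = P^T *m T *m Q *m Q^T.
    by have := congr1 trmx A2; rewrite !trmx_mul !trmxK !mulmxA.
  by rewrite -mulmxA -A2' mulmxA PP mul1mx.
subst k.
have QQ : Q *m Q^T = 1%:M by apply: mulmx1C.
by rewrite !mulmxA -A1 -mulmxA QQ mulmx1.
Qed.


Lemma core (R : realFieldType) k (D sg a b : 'I_k -> R) (X Z : 'I_k -> 'I_k -> R) (kap : R) (i0 : 'I_k) :
  (forall i, a i * b i = kap) -> (forall i, 0 <= a i) -> (forall i, 0 <= b i) ->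
  (forall j i, D j * Z j i = X j i * b i) -> (forall j i, D j * X j i = Z j i * a i) ->
  (forall i, a i != 0 -> b i = \sum_j Z j i ^+ 2) ->
  (forall i, a i = 0 -> forall j, X j i = 0) -> (forall i, b i = 0 -> forall j, Z j i = 0) ->
  (forall j, 0 < sg j) -> (forall j, D j = 2 * sg j - \sum_i X j i * Z j i) ->
  exists d, (forall i, \sum_j X j i * Z j i = d) /\ (forall j, 0 <= \sum_i X j i * Z j i).
Proof.
move=> hab ha hb h1 h2 hbn ha0 hb0 sgp hD.
have [k0|kn0] := eqVneq kap 0.
  have zero : forall j i, X j i * Z j i = 0.
    move=> j i; have := hab i; rewrite k0 => /eqP; rewrite mulf_eq0 => /orP [/eqP/ha0->|/eqP/hb0->];
    by rewrite ?mul0r ?mulr0.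
  exists 0; split => [i|j]; first by apply: big1 => j _.
  by rewrite big1.
have an0 : forall i, a i != 0 by move=> i; apply/eqP => h; move: (hab i); rewrite h mul0r => /esym/eqP; rewrite (negbTE kn0).
have bn0 : forall i, b i != 0 by move=> i; apply/eqP => h; move: (hab i); rewrite h mulr0 => /esym/eqP; rewrite (negbTE kn0).
have bp : forall i, 0 < b i by move=> i; rewrite lt_def bn0 hb.
have Xe : forall j i, X j i = D j * Z j i / b i.
  by move=> j i; rewrite h1 mulfK.
have D2 : forall j i, Z j i != 0 -> D j ^+ 2 = kap.
  move=> j i zn; apply: (mulIf zn).
  by rewrite expr2 -mulrA h1 mulrA h2 -mulrA hab mulrC.
have Yw : forall j, \sum_i X j i * Z j i = D j * \sum_i Z j i ^+ 2 / b i.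
  move=> j; rewrite mulr_sumr; apply: eq_bigr => i _; rewrite Xe; field.
  exact: bn0.
have Dpos : forall j i, Z j i != 0 -> 0 < D j.
  move=> j i zn.
  have Dn0 : D j != 0.
    apply/eqP => h; have := D2 j i zn; rewrite h expr0n /= => /esym/eqP; by rewrite (negbTE kn0).
  rewrite lt_def Dn0 /=; rewrite leNgt; apply/negP => Dneg.
  have w0 : 0 <= \sum_i Z j i ^+ 2 / b i.
    by apply: sumr_ge0 => i' _; apply: divr_ge0; [apply: sqr_ge0 | apply: hb].
  have := hD j; rewrite Yw.
  have := sgp j; have : D j * \sum_i Z j i ^+ 2 / b i <= 0.
    by rewrite nmulr_rle0.
  lra.
have [j0 zj0] : exists j0, Z j0 i0 != 0.
  have [/existsP //|hz] := boolP [exists j, Z j i0 != 0].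
  move: hz; rewrite negb_exists => /forallP hz.
  have := hbn i0 (an0 i0); rewrite big1 => [h|j _]; first by move: (bn0 i0); rewrite h eqxx.
  by have := hz j; rewrite negbK => /eqP ->; rewrite expr0n.
set d := D j0.
have dp : 0 < d := Dpos j0 i0 zj0.
have Dd : forall j i, Z j i != 0 -> D j = d.
  move=> j i zn; apply/eqP; rewrite -(@eqrXn2 _ 2) // ?ltW ?(Dpos j i zn) //.
  by rewrite (D2 j i zn) (D2 j0 i0 zj0).
exists d; split.
  move=> i.
  have -> : \sum_j X j i * Z j i = \sum_j d * Z j i ^+ 2 / b i.
    apply: eq_bigr => j _; rewrite Xe.
    have [->|zn] := eqVneq (Z j i) 0; first by rewrite expr0n /=; ring.
    rewrite (Dd j i zn); field; exact: bn0.
  rewrite -mulr_suml -mulr_sumr -hbn ?an0 //; field; exact: bn0.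
move=> j; rewrite Yw.
have [zall|] := boolP [forall i, Z j i == 0].
  rewrite big1 ?mulr0 // => i _; move/forallP: zall => /(_ i) /eqP ->.
  by rewrite expr0n mul0r.
rewrite negb_forall => /existsP [i zn].
apply: mulr_ge0; first exact: ltW (Dpos j i zn).
by apply: sumr_ge0 => i' _; apply: divr_ge0; [apply: sqr_ge0 | apply: hb].
Qed.


Lemma ortho_entry (R : realFieldType) m k (P : 'M[R]_(m, k)) : P^T *m P = 1%:M ->
  forall j j', \sum_a P a j * P a j' = (j == j')%:R.
Proof.
move=> hP j j'; have : (P^T *m P) j j' = (1%:M : 'M[R]_k) j j' by rewrite hP.
by rewrite !mxE => <-; apply: eq_bigr => a _; rewrite mxE.
Qed.

Lemma ee_ortho (R : realFieldType) m n k (P : 'M[R]_(m, k)) (Q : 'M[R]_(n, k)) :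
  P^T *m P = 1%:M -> Q^T *m Q = 1%:M -> forall l l', ee P Q l l' = (l == l')%:R.
Proof.
move=> hP hQ l l'; rewrite /ee (ortho_entry hP) (ortho_entry hQ).
by case: (l == l'); rewrite ?mulr1 ?mulr0.
Qed.

Lemma sum_delta1 (R : realFieldType) k (l : 'I_k) : \sum_l' ((l == l')%:R : R) = 1.
Proof.
rewrite -[RHS](sum_delta l (fun _ => (1 : R))); apply: eq_bigr => l' _; by rewrite mul1r.
Qed.

Lemma cc_PQ (R : realFieldType) m n k (P : 'M[R]_(m, k)) (Q : 'M[R]_(n, k)) :
  P^T *m P = 1%:M -> Q^T *m Q = 1%:M -> forall l, cc P Q (P *m Q^T) l = 1.
Proof.
move=> hP hQ l; rewrite (cc_w l (TE P Q)).
under eq_bigr => l' _ do rewrite mul1r (ee_ortho hP hQ).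
exact: sum_delta1.
Qed.

Lemma frob2_PQ (R : realFieldType) m n k (P : 'M[R]_(m, k)) (Q : 'M[R]_(n, k)) :
  P^T *m P = 1%:M -> Q^T *m Q = 1%:M -> frob2 (P *m Q^T) = k%:R.
Proof.
move=> hP hQ; rewrite (frob2_w (TE P Q)).
transitivity (\sum_(l < k) (1 : R)); last by rewrite sumr_const card_ord.
apply: eq_bigr => l _; under eq_bigr => l' _ do rewrite !mul1r (ee_ortho hP hQ).
exact: sum_delta1.
Qed.

Lemma cc_ip (R : realFieldType) m n k d (U : 'M[R]_(m, k)) (V : 'M[R]_(n, k)) (P : 'M[R]_(m, d)) (Q : 'M[R]_(n, d)) l :
  cc U V (P *m Q^T) l = ip (P^T *m col l U) (Q^T *m col l V).
Proof.
rewrite ip_mull trmxK /cc /ip; apply: eq_bigr => a _.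
rewrite big_ord1 mulmxA [X in _ * X]mxE mulr_sumr; apply: eq_bigr => b _.
rewrite [col l U a 0]mxE [col l V b 0]mxE; ring.
Qed.

Lemma bessel (R : realFieldType) m d (P : 'M[R]_(m, d)) (p : 'cV[R]_m) : P^T *m P = 1%:M ->
  ip (P^T *m p) (P^T *m p) <= ip p p.
Proof.
move=> hP; set g := P^T *m p.
have e1 : ip (P *m g) (P *m g) = ip g g by rewrite ip_mull mulmxA hP mul1mx.
have e2 : ip p (P *m g) = ip g g by rewrite ipC ip_mull.
have := ip_ge0 (p - P *m g); rewrite !(ipBl, ipBr) e1 (ipC (P *m g) p) e2.
clearbody g; lra.
Qed.

Lemma col_norm1 (R : realFieldType) m k (P : 'M[R]_(m, k)) l : P^T *m P = 1%:M ->
  ip (col l P) (col l P) = 1.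
Proof.
move=> hP; have := ortho_entry hP l l; rewrite eqxx /= => h.
have -> : (1 : R) = \sum_a P a l * P a l by rewrite h.
by rewrite /ip; apply: eq_bigr => a _; rewrite big_ord1 !mxE.
Qed.

Lemma cc_le1 (R : realFieldType) m n k d (U : 'M[R]_(m, k)) (V : 'M[R]_(n, k)) (P : 'M[R]_(m, d)) (Q : 'M[R]_(n, d)) l :
  U^T *m U = 1%:M -> V^T *m V = 1%:M -> P^T *m P = 1%:M -> Q^T *m Q = 1%:M ->
  cc U V (P *m Q^T) l <= 1.
Proof.
move=> hU hV hP hQ; rewrite cc_ip.
set g := P^T *m col l U; set h := Q^T *m col l V.
have g1 : ip g g <= 1 by rewrite -(col_norm1 l hU); apply: bessel.
have h1 : ip h h <= 1 by rewrite -(col_norm1 l hV); apply: bessel.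
have := ip_CS g h; have := ip_ge0 g; have := ip_ge0 h.
clearbody g h; nra.
Qed.

Lemma nuc_le (R : realFieldType) m n d1 d2 (T : 'M[R]_(m, n)) (P1 : 'M[R]_(m, d1)) (Q1 : 'M[R]_(n, d1))
  (P2 : 'M[R]_(m, d2)) (Q2 : 'M[R]_(n, d2)) (s2 : 'rV[R]_d2) :
  P1^T *m P1 = 1%:M -> Q1^T *m Q1 = 1%:M -> P2^T *m P2 = 1%:M -> Q2^T *m Q2 = 1%:M ->
  (forall i, 0 <= s2 0 i) -> T = P2 *m diag_mx s2 *m Q2^T ->
  ip T (P1 *m Q1^T) <= \sum_i s2 0 i.
Proof.
move=> h1 h2 h3 h4 s0 ->.
rewrite (ip_w (P1 *m Q1^T) (mulmx_diagE P2 Q2 s2)).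
apply: ler_sum => i _; rewrite -[leRHS]mulr1; apply: ler_wpM2l => //.
exact: cc_le1.
Qed.

Lemma nuc_self (R : realFieldType) m n d (P : 'M[R]_(m, d)) (Q : 'M[R]_(n, d)) (s : 'rV[R]_d) :
  P^T *m P = 1%:M -> Q^T *m Q = 1%:M ->
  ip (P *m diag_mx s *m Q^T) (P *m Q^T) = \sum_i s 0 i.
Proof.
move=> hP hQ; rewrite (ip_w (P *m Q^T) (mulmx_diagE P Q s)).
by apply: eq_bigr => i _; rewrite cc_PQ // mulr1.
Qed.

Lemma nuc_unique (R : realFieldType) m n d1 d2 (T : 'M[R]_(m, n)) (P1 : 'M[R]_(m, d1)) (Q1 : 'M[R]_(n, d1))
  (s1 : 'rV[R]_d1) (P2 : 'M[R]_(m, d2)) (Q2 : 'M[R]_(n, d2)) (s2 : 'rV[R]_d2) :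
  P1^T *m P1 = 1%:M -> Q1^T *m Q1 = 1%:M -> P2^T *m P2 = 1%:M -> Q2^T *m Q2 = 1%:M ->
  (forall i, 0 <= s1 0 i) -> (forall i, 0 <= s2 0 i) ->
  T = P1 *m diag_mx s1 *m Q1^T -> T = P2 *m diag_mx s2 *m Q2^T ->
  \sum_i s1 0 i = \sum_i s2 0 i.
Proof.
move=> h1 h2 h3 h4 p1 p2 e1 e2; apply/eqP; rewrite eq_le; apply/andP; split.
  by rewrite -(nuc_self s1 h1 h2) -e1; apply: nuc_le e2.
by rewrite -(nuc_self s2 h3 h4) -e2; apply: nuc_le e1.
Qed.


Lemma Ar_eq (R : realFieldType) m n k (P : 'M[R]_(m, k)) (s : 'rV[R]_k) (Q : 'M[R]_(n, k)) r :
  Ar P s Q r = P *m diag_mx (\row_i ((i < r)%N%:R * s 0 i)) *m Q^T.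
Proof.
apply/matrixP => a b; rewrite mulmx_diagE /Ar summxE big_mkcond /=.
apply: eq_bigr => l _; rewrite mxE; case: (l < r)%N; rewrite ?mul0r ?mul1r //.
by rewrite !mxE big_ord1 !mxE.
Qed.

Lemma sum_in (R : realFieldType) k (S : {set 'I_k}) (d : R) :
  \sum_l (l \in S)%:R * d = #|S|%:R * d.
Proof.
rewrite -mulr_suml; congr (_ * _).
rewrite (eq_bigr (fun l => if l \in S then 1 else 0)); last by move=> l _; case: (l \in S).
by rewrite -big_mkcond /= sumr_const -mulr_natl mulr1.
Qed.

Lemma final_bound (R : realFieldType) m n k (U : 'M[R]_(m, k)) (V : 'M[R]_(n, k))
  (P : 'M[R]_(m, k)) (Q : 'M[R]_(n, k)) (s : 'rV[R]_k) (d : R) (r : nat) (S : {set 'I_k}) :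
  (0 < k)%N -> P^T *m P = 1%:M -> Q^T *m Q = 1%:M ->
  (forall i, \sum_j (P^T *m U) j i * (Q^T *m V) j i = d) -> #|S| = r ->
  k%:R^-1 * (r%:R * d - \sum_(i < k | (i < r)%N) s 0 i) ^+ 2 <= frob2 (U *m PiS S *m V^T - Ar P s Q r).
Proof.
move=> k0 hP hQ hd hS.
set W := P *m Q^T.
have ipX : ip (U *m PiS S *m V^T) W = r%:R * d.
  rewrite (ip_w W (XSE U V S)) -hS -sum_in; apply: eq_bigr => l _; congr (_ * _).
  rewrite cc_ip -(hd l) /ip; apply: eq_bigr => j _; rewrite big_ord1.
  by congr (_ * _); rewrite !mxE; apply: eq_bigr => a _; rewrite !mxE.
have ipA : ip (Ar P s Q r) W = \sum_(i < k | (i < r)%N) s 0 i.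
  rewrite Ar_eq (ip_w W (mulmx_diagE P Q _)) [RHS]big_mkcond /=; apply: eq_bigr => l _.
  rewrite cc_PQ // mulr1 mxE; by case: (l < r)%N; rewrite ?mul1r ?mul0r.
have fW : frob2 W = k%:R by apply: frob2_PQ.
have := ip_CS (U *m PiS S *m V^T - Ar P s Q r) W.
rewrite ipBl ipX ipA -!frob2E fW => h.
have kp : 0 < k%:R :> R by rewrite ltr0n.
rewrite mulrC -ler_pdivlMr; last by rewrite invr_gt0.
by rewrite invrK.
Qed.

Unset Implicit Arguments.


Lemma offdiag_mul (R : realFieldType) k p (D : 'M[R]_k) (Z : 'M[R]_(k, p)) :
  (forall a b, a != b -> D a b = 0) -> forall j i, (D *m Z) j i = D j j * Z j i.
Proof.
move=> hD j i; rewrite mxE (bigD1 j) //= big1 ?addr0 // => l /negbTE lj.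
by rewrite hD ?mul0r // eq_sym lj.
Qed.

Theorem theorem4p2 (R : realFieldType) (m n : nat) (hm : (1 <= m)%N) (hn : (1 <= n)%N)
  (P : 'M[R]_(m, minn m n)) (Q : 'M[R]_(n, minn m n)) (sigma : 'rV[R]_(minn m n))
  (Mst : 'M[R]_(m, n))
  (hP : orthonormal_cols P) (hQ : orthonormal_cols Q)
  (hsig_pos : forall i, 0 < sigma 0 i)
  (hsig_dec : forall i j : 'I_(minn m n), (i < j)%N -> sigma 0 j < sigma 0 i)
  (hM : Mst = P *m diag_mx sigma *m Q^T)
  (U : 'M[R]_(m, minn m n)) (V : 'M[R]_(n, minn m n))
  (hmin : forall (U' : 'M[R]_(m, minn m n)) (V' : 'M[R]_(n, minn m n)),
            avg_loss Mst U V <= avg_loss Mst U' V')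
  (nuc : R) (hnuc : is_nuclear_norm (U *m V^T) nuc)
  (r : nat) (hr1 : (1 <= r)%N) (hrk : (r <= minn m n)%N) :
  let k := minn m n in
  let lambda := nuc / k%:R in
  forall S : {set 'I_k}, #|S| = r ->
    frob2 (U *m PiS S *m V^T - Ar P sigma Q r)
      >= k%:R^-1 * (r%:R * lambda - \sum_(i < k | (i < r)%N) sigma 0 i) ^+ 2.
Proof.
move=> k lambda S hS.
rewrite /lambda /k.
have k0 : (0 < minn m n)%N by rewrite leq_min hm hn.
rewrite /orthonormal_cols in hP hQ.
have Hfo := Fo_min k0 hmin.
have [S1 S2] := sym_conds Hfo.
rewrite hM in S1 S2.
have sneq : forall i j : 'I_(minn m n), i != j -> sigma 0 i != sigma 0 j.
  move=> i j ij; apply/negP => /eqP e.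
  case: (ltngtP i j) => h.
  - by have := hsig_dec _ _ h; rewrite e ltxx.
  - by have := hsig_dec _ _ h; rewrite e ltxx.
  - by move: ij; rewrite (val_inj h) eqxx.
have hk : minn m n = m \/ minn m n = n.
  by case: (leqP m n) => h; [left | right].
have Teq := T_eq hP hQ hsig_pos hk S1 S2.
have Yoff := Y_diag hP hQ hsig_pos sneq S1 S2.
set Y := P^T *m (U *m V^T) *m Q in Teq Yoff.
have YXZ : Y = (P^T *m U) *m (Q^T *m V)^T by rewrite /Y trmx_mul trmxK !mulmxA.
clearbody Y.
have hNV := NV (fun U' => Hfo U' V).
have hNtU := NtU (Hfo U).
set D' := 2%:R *: diag_mx sigma - Y.
have ENfull : 2%:R *: Mst - U *m V^T = P *m D' *m Q^T.
  rewrite hM Teq /D' mulmxBr mulmxBl -scalemxAr -scalemxAl.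
  done.
set X := P^T *m U; set Z := Q^T *m V.
have D'off : forall a b, a != b -> D' a b = 0.
  by move=> a b ab; rewrite /D' !mxE (negbTE ab) Yoff // mulr0n mulr0 subr0.
have D'jj : forall j, D' j j = 2 * sigma 0 j - Y j j.
  by move=> j; rewrite /D' !mxE eqxx mulr1n.
have h1m : D' *m Z = X *m diag_mx (\row_i ga V i).
  by rewrite /Z /X mulmxA -[P^T *m U *m _]mulmxA -hNV ENfull !mulmxA hP mul1mx -!mulmxA.
have h2m : D'^T *m X = Z *m diag_mx (\row_i ga U i).
  rewrite /Z /X mulmxA -[Q^T *m V *m _]mulmxA -hNtU ENfull !trmx_mul trmxK.
  by rewrite !mulmxA hQ mul1mx -!mulmxA.
have D'Toff : forall a b, a != b -> D'^T a b = 0 by move=> a b ab; rewrite mxE D'off // eq_sym.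
have XE : forall j i, X j i = \sum_a P a j * U a i by move=> j i; rewrite /X mxE; apply: eq_bigr => a _; rewrite mxE.
have ZE : forall j i, Z j i = \sum_b Q b j * V b i by move=> j i; rewrite /Z mxE; apply: eq_bigr => a _; rewrite mxE.
have YXZ' : Y = X *m Z^T by rewrite YXZ.
have hNtU' : V *m diag_mx (\row_i ga U i) = Q *m (Z *m diag_mx (\row_i ga U i)).
  by rewrite -hNtU ENfull -h2m /X !trmx_mul trmxK !mulmxA.
clearbody D' X Z.
have h1 : forall j i, (2 * sigma 0 j - Y j j) * Z j i = X j i * ga V i.
  move=> j i; have : (D' *m Z) j i = (X *m diag_mx (\row_i ga V i)) j i by rewrite h1m.
  by rewrite /= (@offdiag_mul _ _ _ _ Z D'off) mul_mx_diag !mxE D'jj.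
have h2 : forall j i, (2 * sigma 0 j - Y j j) * X j i = Z j i * ga U i.
  move=> j i; have : (D'^T *m X) j i = (Z *m diag_mx (\row_i ga U i)) j i by rewrite h2m.
  by rewrite /= (@offdiag_mul _ _ _ _ X D'Toff) mul_mx_diag !mxE D'jj.
have hbn : forall i, ga U i != 0 -> ga V i = \sum_j Z j i ^+ 2.
  move=> i ai.
  have VQZ : forall b, V b i = (Q *m Z) b i.
    move=> b; have : (V *m diag_mx (\row_i ga U i)) b i = (Q *m (Z *m diag_mx (\row_i ga U i))) b i.
      by rewrite hNtU'.
    rewrite mulmxA !mul_mx_diag !mxE => /(mulIf ai).
    done.
  rewrite /ga.
  transitivity (\sum_b V b i * \sum_j Q b j * Z j i).
    by apply: eq_bigr => b _; rewrite expr2 {2}VQZ mxE.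
  under eq_bigr => b _ do rewrite mulr_sumr.
  rewrite exchange_big /=; apply: eq_bigr => j _; rewrite [RHS]expr2 [X in _ = _ * X]ZE mulr_sumr.
  by apply: eq_bigr => b _; ring.
have col0 : forall (p : nat) (W : 'M[R]_(p, minn m n)) i, ga W i = 0 -> forall a, W a i = 0.
  move=> p W i /eqP; rewrite psumr_eq0 => [/allP h a|a _]; last exact: sqr_ge0.
  by have := h a (mem_index_enum a); rewrite /= sqrf_eq0 => /eqP.
have ha0 : forall i, ga U i = 0 -> forall j, X j i = 0.
  move=> i /col0 h j; rewrite XE big1 // => a _; by rewrite h mulr0.
have hb0 : forall i, ga V i = 0 -> forall j, Z j i = 0.
  move=> i /col0 h j; rewrite ZE big1 // => a _; by rewrite h mulr0.
have hD : forall j, 2 * sigma 0 j - Y j j = 2 * sigma 0 j - \sum_i X j i * Z j i.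
  by move=> j; rewrite YXZ' mxE; congr (_ - _); apply: eq_bigr => i _; rewrite mxE.
pose i0 : 'I_(minn m n) := Ordinal k0.
have [d [hd hY]] := core (D := fun j => 2 * sigma 0 j - Y j j) (sg := fun j => sigma 0 j)
   (a := ga U) (b := ga V) (X := fun j i => X j i) (Z := fun j i => Z j i)
   (kap := ga U i0 * ga V i0) i0 (fun i => eq_c Hfo i i0) (ga_ge0 U) (ga_ge0 V) h1 h2 hbn ha0 hb0 hsig_pos hD.
have YjjE : forall j, Y j j = \sum_i X j i * Z j i.
  by move=> j; rewrite YXZ' mxE; apply: eq_bigr => i _; rewrite mxE.
have Ydiag : Y = diag_mx (\row_j Y j j).
  apply/matrixP => a b; rewrite !mxE; case: (eqVneq a b) => [->|ab]; first by rewrite mulr1n.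
  by rewrite Yoff // mulr0n.
have Tsvd : U *m V^T = P *m diag_mx (\row_j Y j j) *m Q^T by rewrite {1}Teq {1}Ydiag.
have ypos : forall j, 0 <= (\row_j Y j j) 0 j by move=> j; rewrite mxE YjjE.
move: hnuc => [d' [P' [s' [Q' [[hP' hQ' hs' hT'] hnE]]]]].
have nE : nuc = (minn m n)%:R * d.
  rewrite hnE (nuc_unique hP' hQ' hP hQ hs' ypos hT' Tsvd).
  under eq_bigr => j _ do rewrite mxE YjjE.
  rewrite exchange_big /=.
  under eq_bigr => i _ do rewrite hd.
  by rewrite sumr_const card_ord mulr_natl.
have kR : (minn m n)%:R != 0 :> R by rewrite pnatr_eq0 -lt0n.
have -> : nuc / (minn m n)%:R = d by rewrite nE mulrC mulKf.
apply: final_bound => //.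
move=> i; rewrite -(hd i); apply: eq_bigr => j _; rewrite XE ZE !mxE.
by congr (_ * _); apply: eq_bigr => a _; rewrite mxE.
Qed.
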